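(* Let $N\ge1$ be an integer, $d>0$, $T>0$, and $0\le s_1\le\dots\le s_N$. Let $x^*$ be the optimal solution of the (assumed feasible) problem $$\min_{x\in\mathbb{R}^{N+1}}\ \sum_{i=1}^{N+1}x_i^2$$ subject to - $\sum_{i=1}^k x_i\ge s_k+kd$ for $1\le k\le N$, - $x_i\ge 2d$ for $2\le i\le N$, - $x_{N+1}\ge d$, - $\sum_{i=1}^{N+1}x_i=T+Nd$. Then $x_1^*>x_2^*$ only if $x_1^*=s_1+d$, and $x_1^*<x_2^*$ only if $x_i^*=2d$ for all $2\le i\le N$.
   Context: The problem arises from age-of-information minimization for a single energy harvesting transmitter with energy arrival times $s_k$, fixed service time $d$, and session length $T$. Its objective is strictly convex, so the optimal solution is unique. *)

(* Defs.v *)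
(* concrete reals R. Vectors x in R^{N+1} are represented as
   x : nat -> R, with only the entries x 1, ..., x (N+1) being meaningful. *)
From Stdlib Require Import Reals.
Open Scope R_scope.

Fixpoint psum (x : nat -> R) (k : nat) : R :=
  match k with
  | O => 0
  | S k' => psum x k' + x k
  end.

Definition aoi_obj (N : nat) (x : nat -> R) : R :=
  psum (fun i => (x i)^2) (S N).

Definition aoi_feasible (N : nat) (d T : R) (s : nat -> R) (x : nat -> R) : Prop :=
  (forall k, (1 <= k <= N)%nat -> psum x k >= s k + INR k * d) /\
  (forall i, (2 <= i <= N)%nat -> x i >= 2 * d) /\
  x (S N) >= d /\
  psum x (S N) = T + INR N * d.

Definition aoi_optimal (N : nat) (d T : R) (s : nat -> R) (x : nat -> R) : Prop :=
  aoi_feasible N d T s x /\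
  forall y, aoi_feasible N d T s y -> aoi_obj N x <= aoi_obj N y.

(* Main.v *)
Require Import Defs.
From Stdlib Require Import Reals Lra Lia.
Open Scope R_scope.

Definition upd (x : nat -> R) (a : nat) (c : R) : nat -> R :=
  fun n => if Nat.eqb n a then x n + c else x n.

Lemma psum_ext f g k : (forall n, f n = g n) -> psum f k = psum g k.
Proof. intros H; induction k; simpl; [reflexivity| rewrite IHk, H; reflexivity]. Qed.

Lemma psum_upd x a c k : (1 <= a)%nat ->
  psum (upd x a c) k = psum x k + (if Nat.leb a k then c else 0).
Proof.
  intros Ha; induction k; simpl.
  - destruct (Nat.leb_spec a 0); [lia| lra].
  - rewrite IHk; unfold upd.
    destruct (Nat.leb_spec a k), (Nat.eqb_spec (S k) a), (Nat.leb_spec a (S k));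
      try lia; lra.
Qed.

Lemma swap_lemma N d T s x a b e :
  aoi_optimal N d T s x -> a <> b -> (1 <= a <= S N)%nat -> (1 <= b <= S N)%nat ->
  aoi_feasible N d T s (upd (upd x a e) b (-e)) ->
  (x a + e)^2 + (x b - e)^2 < (x a)^2 + (x b)^2 -> False.
Proof.
  intros [_ Hopt] Hab Ha Hb Hf Hlt.
  specialize (Hopt _ Hf). unfold aoi_obj in Hopt.
  assert (E : psum (fun i => (upd (upd x a e) b (-e) i)^2) (S N) =
     psum (upd (upd (fun i => (x i)^2) a ((x a + e)^2 - (x a)^2)) b ((x b - e)^2 - (x b)^2)) (S N)).
  { apply psum_ext; intros n; unfold upd.
    destruct (Nat.eqb_spec n b), (Nat.eqb_spec n a); subst; try lia; ring. }
  rewrite E, psum_upd, psum_upd in Hopt by lia.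
  destruct (Nat.leb_spec a (S N)), (Nat.leb_spec b (S N)); try lia; lra.
Qed.

Theorem lemma2 (N : nat) (d T : R) (s : nat -> R) (xs : nat -> R) :
  (1 <= N)%nat -> 0 < d -> 0 < T ->
  0 <= s 1%nat ->
  (forall k, (1 <= k)%nat -> (k < N)%nat -> s k <= s (S k)) ->
  aoi_optimal N d T s xs ->
  (xs 1%nat > xs 2%nat -> xs 1%nat = s 1%nat + d) /\
  (xs 1%nat < xs 2%nat -> forall i, (2 <= i <= N)%nat -> xs i = 2 * d).
Proof.
  intros HN Hd HT Hs0 Hmono Hopt.
  pose proof Hopt as [[F1 [F2 [F3 F4]]] _].
  assert (P1 : psum xs 1 = xs 1%nat) by (simpl; ring).
  split.
  - intros Hgt.
    assert (H1 := F1 1%nat ltac:(lia)). rewrite P1 in H1. simpl INR in H1.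
    destruct (Rle_lt_or_eq_dec (s 1%nat + d) (xs 1%nat)) as [Hl|Heq]; [lra| |lra].
    exfalso.
    set (e := Rmin ((xs 1%nat - xs 2%nat)/2) (xs 1%nat - s 1%nat - d)).
    assert (He1 : e <= (xs 1%nat - xs 2%nat)/2) by apply Rmin_l.
    assert (He2 : e <= xs 1%nat - s 1%nat - d) by apply Rmin_r.
    assert (He0 : 0 < e) by (unfold e; apply Rmin_case; lra).
    apply (swap_lemma N d T s xs 2 1 e Hopt); try lia.
    + repeat split.
      * intros k Hk. rewrite psum_upd, psum_upd by lia.
        specialize (F1 k Hk).
        destruct (Nat.leb_spec 1 k), (Nat.leb_spec 2 k); try lia.
        -- lra.
        -- assert (k = 1%nat) by lia; subst k. rewrite P1. change (INR 1) with 1. lra.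
      * intros i Hi. specialize (F2 i Hi). unfold upd.
        destruct (Nat.eqb_spec i 1), (Nat.eqb_spec i 2); try lia; lra.
      * unfold upd. destruct (Nat.eqb_spec (S N) 1), (Nat.eqb_spec (S N) 2); try lia; lra.
      * rewrite psum_upd, psum_upd by lia.
        destruct (Nat.leb_spec 1 (S N)), (Nat.leb_spec 2 (S N)); try lia; lra.
    + nra.
  - intros Hlt i Hi.
    destruct (Rle_lt_or_eq_dec (2*d) (xs i)) as [Hl|Heq]; [apply Rge_le, F2; lia| |lra].
    exfalso.
    assert (Key : forall j, (2 <= j <= N)%nat -> xs j > 2*d -> xs j > xs 1%nat -> False).
    { intros j Hj Hj1 Hj2.
      set (e := Rmin ((xs j - xs 1%nat)/2) (xs j - 2*d)).
      assert (He1 : e <= (xs j - xs 1%nat)/2) by apply Rmin_l.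
      assert (He2 : e <= xs j - 2*d) by apply Rmin_r.
      assert (He0 : 0 < e) by (unfold e; apply Rmin_case; lra).
      apply (swap_lemma N d T s xs 1 j e Hopt); try lia.
      + repeat split.
        * intros k Hk. rewrite psum_upd, psum_upd by lia.
          specialize (F1 k Hk).
          destruct (Nat.leb_spec 1 k), (Nat.leb_spec j k); try lia; lra.
        * intros i' Hi'. specialize (F2 i' Hi'). unfold upd.
          destruct (Nat.eqb_spec i' j), (Nat.eqb_spec i' 1); subst; try lia; lra.
        * unfold upd. destruct (Nat.eqb_spec (S N) j), (Nat.eqb_spec (S N) 1); try lia; lra.
        * rewrite psum_upd, psum_upd by lia.
          destruct (Nat.leb_spec 1 (S N)), (Nat.leb_spec j (S N)); try lia; lra.
      + nra. }
    assert (H2 : xs 2%nat >= 2*d) by (apply F2; lia).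
    destruct (Rlt_or_le (xs 1%nat) (2*d)).
    + apply (Key i); lia || lra.
    + apply (Key 2%nat); lia || lra.
Qed.
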